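(* Let $F$ be the free group on the totally ordered set $X=\{x_1<\dots<x_m\}$, and let $n\ge1$, $c\ge1$ with $c\ge n-1$. Let $Y$ be the set of all basic commutators on $X$ of weights $c+1,\dots,c+n$ and $Z=\{[b,a]: a,b\in Y,\ b>a\}$. Then $$\gamma_2(\gamma_{c+1}(F))=\langle Z\rangle\,[\gamma_{c+n+1}(F),\gamma_{c+1}(F)],$$ i.e. $\gamma_2(\gamma_{c+1}(F))\equiv\langle Z\rangle \pmod{[\gamma_{c+n+1}(F),\gamma_{c+1}(F)]}$.
   Context: $\gamma_k(F)$ is the $k$-th term of the lower central series of $F$, and $\gamma_2(H)=[H,H]$. Basic commutators on a totally ordered set $X$ of free generators are defined inductively with their weights $wt$: the elements of $X$ are the basic commutators of weight 1, ordered as in $X$. Assuming basic commutators of weight $<k$ have been defined and ordered, a commutator $[b,a]$ is a basic commutator of weight $k$ if $b,a$ are basic commutators with $wt(a)+wt(b)=k$, $b>a$, and, if $b=[b_1,b_2]$ (with $b_1,b_2$ basic), then $b_2\le a$. The ordering is then extended to weight $k$ so that all basic commutators of smaller weight precede those of weight $k$. The order on $Y$ is the one inherited from this ordering. *)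

(* Defs.v *)
(* Concrete model of the free group F on X = {x_0 < ... < x_(m-1)}
   (indexed by 'I_m): elements are freely reduced words over letters (i, inv). *)
From mathcomp Require Import all_boot.
Set Implicit Arguments. Unset Strict Implicit. Unset Printing Implicit Defensive.

Section FreeGroup.
Variable m : nat.

(* a letter (i, false) is x_i, (i, true) is x_i^-1 *)
Definition letter := ('I_m * bool)%type.
Definition cancels (a b : letter) : bool := (a.1 == b.1) && (a.2 != b.2).

Fixpoint reducedb (w : seq letter) : bool :=
  match w with
  | a :: ((b :: _) as w') => ~~ cancels a b && reducedb w'
  | _ => true
  end.

Definition cons_red (a : letter) (w : seq letter) : seq letter :=
  match w with
  | b :: w' => if cancels a b then w' else a :: w
  | [::] => [:: a]
  end.

Definition reduce (w : seq letter) : seq letter := foldr cons_red [::] w.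

Lemma cons_red_reduced a w : reducedb w -> reducedb (cons_red a w).
Proof.
case: w => [|b w] //= Hw; case: ifP => hab.
  by case: w Hw => [|c w] //= /andP[].
by rewrite /= hab.
Qed.

Lemma reduce_reduced w : reducedb (reduce w).
Proof. by elim: w => [|a w IH] //=; apply: cons_red_reduced. Qed.

Definition FG := {w : seq letter | reducedb w}.
Definition mkFG (w : seq letter) : FG := exist _ (reduce w) (reduce_reduced w).
Definition FG1 : FG := mkFG [::].
Definition FGmul (u v : FG) : FG := mkFG (sval u ++ sval v).
Definition FGinv (u : FG) : FG :=
  mkFG (map (fun a : letter => (a.1, ~~ a.2)) (rev (sval u))).
Definition FGgen (i : 'I_m) : FG := mkFG [:: (i, false)].
Definition FGcomm (u v : FG) : FG := FGmul (FGmul (FGinv u) (FGinv v)) (FGmul u v).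

Inductive gen (S : FG -> Prop) : FG -> Prop :=
  | gen_base x : S x -> gen S x
  | gen_one : gen S FG1
  | gen_mul x y : gen S x -> gen S y -> gen S (FGmul x y)
  | gen_inv x : gen S x -> gen S (FGinv x).

Definition commsub (H K : FG -> Prop) : FG -> Prop :=
  gen (fun g => exists h k, H h /\ K k /\ g = FGcomm h k).

(* lower central series: gamma_1 = F, gamma_(k+1) = [gamma_k, F]
   (gamma_0 is also set to F, unused) *)
Fixpoint lcs (k : nat) : FG -> Prop :=
  match k with
  | 0 => fun _ => True
  | k'.+1 => if k' is 0 then fun _ => True
             else commsub (lcs k') (fun _ => True)
  end.

Definition setmul (A B : FG -> Prop) : FG -> Prop :=
  fun g => exists a b, A a /\ B b /\ g = FGmul a b.

Inductive comm : Type := Leaf of 'I_m | Node of comm & comm.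

Fixpoint wt (u : comm) : nat :=
  match u with Leaf _ => 1 | Node b a => wt b + wt a end.

Fixpoint eval (u : comm) : FG :=
  match u with Leaf i => FGgen i | Node b a => FGcomm (eval b) (eval a) end.

(* [basic] is the set of basic commutators and [lt] a total order on them,
   as in the inductive definition (order within a given weight arbitrary). *)
Record basic_order (lt : comm -> comm -> Prop) (basic : comm -> Prop) : Prop := {
  bo_leaf : forall i, basic (Leaf i);
  bo_leaf_lt : forall i j : 'I_m, lt (Leaf i) (Leaf j) <-> (i < j)%N;
  bo_node : forall b a, basic (Node b a) <->
     [/\ basic b, basic a, lt a b &
        match b with Leaf _ => True | Node _ b2 => b2 = a \/ lt b2 a end];
  bo_irrefl : forall u, basic u -> ~ lt u u;
  bo_trans : forall u v w, basic u -> basic v -> basic w ->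
     lt u v -> lt v w -> lt u w;
  bo_total : forall u v, basic u -> basic v -> u = v \/ lt u v \/ lt v u;
  bo_weight : forall u v, basic u -> basic v -> (wt u < wt v)%N -> lt u v
}.

End FreeGroup.

(* Main.v *)
Require Import Defs.
From mathcomp Require Import all_boot.
From Stdlib Require List ClassicalEpsilon.
From mathcomp Require Import zify.

Set Implicit Arguments. Unset Strict Implicit. Unset Printing Implicit Defensive.

Section Grp.
Variable m : nat.
Local Notation FG := (FG m).
Local Notation letter := (letter m).
Local Notation cons_red := (@cons_red m).

Definition linv (a : letter) : letter := (a.1, ~~ a.2).

Lemma cancels_linv (a b : letter) : cancels a b -> b = linv a.
Proof.
case: a b => [i x] [j y]; rewrite /cancels /linv /= => /andP[/eqP -> h].
by case: x y h => [] [].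
Qed.

Lemma cancels_linvE (a : letter) : cancels a (linv a).
Proof. by case: a => i [] ; rewrite /cancels /= eqxx. Qed.

Lemma cons_red_inv (a : letter) t : reducedb t -> cons_red a (cons_red (linv a) t) = t.
Proof.
case: t => [|b t] /=; first by rewrite cancels_linvE.
move=> Ht; case: ifP => hab.
  have eb : b = a.
    move/cancels_linv: hab; case: a {Ht} => i x; case: b => j y /=.
    by rewrite /linv /= negbK.
  subst b; case: t Ht => [|c t] //=.
  case/andP=> hac _; case: ifP => // h.
  by move/cancels_linv: h => ec; subst c; rewrite cancels_linvE in hac.
by rewrite /= cancels_linvE.
Qed.

Lemma foldr_cons_red_reduced (u t : seq letter) : reducedb t -> reducedb (foldr cons_red t u).
Proof. elim: u => [|a u IH] //= Ht; exact: cons_red_reduced (IH Ht). Qed.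

Lemma foldr_cons_red_step t a (w : seq letter) :
  reducedb t ->
  foldr cons_red t (cons_red a w) = cons_red a (foldr cons_red t w).
Proof.
move=> Ht; case: w => [|b w] //=; case: ifP => // hab.
move/cancels_linv: (hab) => ->.
by rewrite cons_red_inv //; apply: foldr_cons_red_reduced.
Qed.

Lemma foldr_reduce t (u : seq letter) : reducedb t ->
  foldr cons_red t (reduce u) = foldr cons_red t u.
Proof.
move=> Ht; elim: u => [|a u IH] //=.
by rewrite foldr_cons_red_step // IH.
Qed.

Lemma reduce_id (w : seq letter) : reducedb w -> reduce w = w.
Proof.
elim: w => [|a w IH] //= H.
have Hw : reducedb w by case: w H {IH} => [|b w] //= /andP[].
rewrite IH //; case: w H {IH Hw} => [|b w] //= /andP[h _].
by rewrite (negbTE h).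
Qed.

Lemma reduce_cat (u v : seq letter) : reduce (u ++ v) = foldr cons_red (reduce v) u.
Proof. by rewrite /reduce foldr_cat. Qed.

Lemma FG_eq (x y : FG) : sval x = sval y -> x = y.
Proof. by move=> h; apply: val_inj. Qed.

Lemma mkFG_val (x : FG) : mkFG (sval x) = x.
Proof. by apply: FG_eq; rewrite /= reduce_id //; case: x. Qed.

Lemma mulA (x y z : FG) : FGmul (FGmul x y) z = FGmul x (FGmul y z).
Proof.
apply: FG_eq; case: x => [u Hu]; case: y => [v Hv]; case: z => [w Hw] /=.
rewrite [LHS]reduce_cat foldr_reduce; last exact: reduce_reduced.
rewrite [RHS]reduce_cat (reduce_id (reduce_reduced _)) foldr_cat.
by rewrite reduce_cat.
Qed.

Lemma mul1g (x : FG) : FGmul (FG1 m) x = x.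
Proof. by apply: FG_eq; case: x => [u Hu] /=; rewrite reduce_id. Qed.

Lemma mulg1 (x : FG) : FGmul x (FG1 m) = x.
Proof. by apply: FG_eq; case: x => [u Hu] /=; rewrite cats0 reduce_id. Qed.

Lemma foldr_inv (u t : seq letter) : reducedb t ->
  foldr cons_red (foldr cons_red t u) (map linv (rev u)) = t.
Proof.
elim: u t => [|a u IH] t Ht //=.
rewrite rev_cons map_rcons -cats1 foldr_cat /=.
have linvK : linv (linv a) = a by case: a => ? ?; rewrite /linv /= negbK.
rewrite -{2}linvK cons_red_inv; last exact: foldr_cons_red_reduced.
exact: IH.
Qed.

Lemma mulVg (x : FG) : FGmul (FGinv x) x = FG1 m.
Proof.
apply: FG_eq; case: x => [u Hu] /=.
rewrite reduce_cat (reduce_id Hu) foldr_reduce //.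
have := foldr_inv u (t:=[::]) is_true_true.
by rewrite -/(reduce u) reduce_id.
Qed.


Local Notation "x ** y" := (FGmul x y) (at level 40, left associativity).
Local Notation inv := (@FGinv m).
Local Notation one := (FG1 m).

Lemma mulKg (x y : FG) : inv x ** (x ** y) = y.
Proof. by rewrite -mulA mulVg mul1g. Qed.

Lemma mulgV (x : FG) : x ** inv x = one.
Proof.
have h : (x ** inv x) ** (x ** inv x) = x ** inv x.
  by rewrite mulA -(mulA (inv x)) mulVg mul1g.
by rewrite -[LHS](mulKg (x ** inv x)) h mulVg.
Qed.

Lemma mulKVg (x y : FG) : x ** (inv x ** y) = y.
Proof. by rewrite -mulA mulgV mul1g. Qed.


Lemma inv_uniq (x y : FG) : x ** y = one -> inv x = y.
Proof. by move=> h; rewrite -(mulg1 (inv x)) -h mulKg. Qed.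

Lemma invK (x : FG) : inv (inv x) = x.
Proof. exact: inv_uniq (mulVg x). Qed.

Lemma invM (x y : FG) : inv (x ** y) = inv y ** inv x.
Proof. by apply: inv_uniq; rewrite mulA mulKVg mulgV. Qed.

Lemma inv1 : inv one = one.
Proof. by apply: inv_uniq; rewrite mul1g. Qed.

Lemma mulgK (x y : FG) : x ** y ** inv y = x.
Proof. by rewrite mulA mulgV mulg1. Qed.

Ltac gsimpl := repeat (rewrite ?invM ?invK ?inv1 ?mulA ?mulKg ?mulKVg ?mulVg ?mulgV ?mul1g ?mulg1).

Definition FGconj (x g : FG) := inv g ** x ** g.
Local Notation cm := (@FGcomm m).
Local Notation cj := FGconj.

Lemma commE x y : cm x y = inv x ** inv y ** x ** y.
Proof. by rewrite /FGcomm !mulA. Qed.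

Ltac gsolve := rewrite /FGconj ?commE; gsimpl; try reflexivity.

Lemma commV x y : inv (cm x y) = cm y x.
Proof. by gsolve. Qed.

Lemma commMl x y z : cm (x ** y) z = cj (cm x z) y ** cm y z.
Proof. by gsolve. Qed.

Lemma commMr x y z : cm x (y ** z) = cm x z ** cj (cm x y) z.
Proof. by gsolve. Qed.

Lemma commVl x y : cm (inv x) y = cj (inv (cm x y)) (inv x).
Proof. by gsolve. Qed.

Lemma commVr x y : cm x (inv y) = cj (inv (cm x y)) (inv y).
Proof. by gsolve. Qed.

Lemma conjE x g : cj x g = x ** cm x g.
Proof. by gsolve. Qed.

Lemma commgg x : cm x x = one.
Proof. by gsolve. Qed.

Lemma comm1g x : cm one x = one.
Proof. by gsolve. Qed.

Lemma conjM x y g : cj (x ** y) g = cj x g ** cj y g.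
Proof. by gsolve. Qed.

Lemma conjV x g : cj (inv x) g = inv (cj x g).
Proof. by gsolve. Qed.

Lemma conj1 g : cj one g = one.
Proof. by gsolve. Qed.

Lemma conjK x g : cj (cj x (inv g)) g = x.
Proof. by gsolve. Qed.

Lemma conj_comm x y g : cj (cm x y) g = cm (cj x g) (cj y g).
Proof. by gsolve. Qed.

Lemma hall_witt x y z :
  cj (cm (cm x (inv y)) z) y ** cj (cm (cm y (inv z)) x) z ** cj (cm (cm z (inv x)) y) x = one.
Proof. by gsolve. Qed.


Lemma commg1 x : cm x one = one.
Proof. by gsolve. Qed.

Lemma conjKV x g : cj (cj x g) (inv g) = x.
Proof. by gsolve. Qed.

Lemma comm_conj h g : cm h g = inv h ** cj h g.
Proof. by gsolve. Qed.

Definition subgrp (P : FG -> Prop) :=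
  [/\ P one, (forall x y, P x -> P y -> P (x ** y)) & (forall x, P x -> P (inv x))].
Definition normalp (P : FG -> Prop) := forall x g, P x -> P (cj x g).

Lemma gen_subgrp (S : FG -> Prop) : subgrp (gen S).
Proof. split; [exact: gen_one | exact: gen_mul | exact: gen_inv]. Qed.

Lemma gen_min (S : FG -> Prop) (P : FG -> Prop) : subgrp P -> (forall x, S x -> P x) ->
  forall x, gen S x -> P x.
Proof. by case=> P1 PM PV SP x; elim=> // *; auto. Qed.

Lemma gen_sub (S T : FG -> Prop) : (forall x, S x -> gen T x) -> forall x, gen S x -> gen T x.
Proof. by move=> h; apply: gen_min => //; exact: gen_subgrp. Qed.

Lemma gen_normal (S : FG -> Prop) : (forall x g, S x -> gen S (cj x g)) -> normalp (gen S).
Proof.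
move=> h x g; elim=> {x} [x Sx | | x y _ Hx _ Hy | x _ Hx].
- exact: h.
- by rewrite conj1; apply: gen_one.
- by rewrite conjM; apply: gen_mul.
- by rewrite conjV; apply: gen_inv.
Qed.

Section CommSub.
Variables (P : FG -> Prop).
Hypotheses (sP : subgrp P) (nP : normalp P).

Lemma commL_subgrp h : subgrp (fun g => P (cm g h)).
Proof.
case: sP => P1 PM PV; split.
- by rewrite comm1g.
- by move=> x y Hx Hy; rewrite commMl; apply: PM => //; apply: nP.
- by move=> x Hx; rewrite commVl; apply: nP; apply: PV.
Qed.

Lemma commR_subgrp g : subgrp (fun h => P (cm g h)).
Proof.
case: sP => P1 PM PV; split.
- by rewrite commg1.
- by move=> x y Hx Hy; rewrite commMr; apply: PM => //; apply: nP.
- by move=> x Hx; rewrite commVr; apply: nP; apply: PV.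
Qed.

Lemma comm_invl g h : P (cm g h) -> P (cm (inv g) h).
Proof. by case: (commL_subgrp h) => _ _; apply. Qed.

Lemma comm_invr g h : P (cm g h) -> P (cm g (inv h)).
Proof. by case: (commR_subgrp g) => _ _; apply. Qed.

Lemma comm_swap g h : P (cm g h) -> P (cm h g).
Proof. by case: sP => _ _ PV /PV; rewrite commV. Qed.

Lemma hw_cons x y z :
  P (cm (cm x (inv y)) z) -> P (cm (cm z (inv x)) y) -> P (cm (cm y (inv z)) x).
Proof.
case: sP => P1 PM PV h1 h3.
have e := hall_witt x y z.
set A := cj _ y in e; set B := cj _ z in e; set C := cj _ x in e.
have eB : B = inv A ** inv C.
  have <- : inv A ** (A ** B ** C) ** inv C = B by clearbody A B C; gsimpl.
  by rewrite e mulg1.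
rewrite -(conjKV (cm (cm y (inv z)) x) z) -/B eB.
apply: nP; apply: PM; apply: PV; exact: nP.
Qed.

End CommSub.

Lemma FG_gen (x : FG) : gen (fun g : FG => exists i, g = FGgen i) x.
Proof.
rewrite -(mkFG_val x); move: (sval x) => w; elim: w => [|a w IH].
  exact: gen_one.
have -> : mkFG (a :: w) = mkFG [:: a] ** mkFG w.
  apply: FG_eq => /=; rewrite (reduce_id (reduce_reduced w)) /=.
  by [].
apply: gen_mul => //; case: a => i [].
- have -> : mkFG [:: (i, true)] = inv (FGgen i) by apply: FG_eq.
  by apply: gen_inv; apply: gen_base; exists i.
- by apply: gen_base; exists i.
Qed.


Local Notation lcs := (@lcs m).
Local Notation TT := (fun _ : FG => True).

Lemma lcsS k : 0 < k -> lcs k.+1 = commsub (lcs k) TT.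
Proof. by case: k. Qed.

Lemma lcs_subgrp k : subgrp (lcs k).
Proof. by case: k => [|[|k]] //; exact: gen_subgrp. Qed.

Lemma lcs_normal k : normalp (lcs k).
Proof.
elim: k => [|[|k] IH] //; apply: gen_normal => x g [h [f [Hh [_ ->]]]].
rewrite conj_comm; apply: gen_base; exists (cj h g), (cj f g); split => //.
exact: IH.
Qed.

Lemma lcs_comm k h g : 0 < k -> lcs k h -> lcs k.+1 (cm h g).
Proof. by move=> k0 Hh; rewrite lcsS //; apply: gen_base; exists h, g. Qed.

Lemma lcs_decr k x : lcs k.+1 x -> lcs k x.
Proof.
case: k => [|k] //; rewrite lcsS //; apply: gen_min; first exact: lcs_subgrp.
move=> y [h [g [Hh [_ ->]]]]; rewrite comm_conj.
case: (lcs_subgrp k.+1) => _ PM PV; apply: PM; first exact: PV.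
exact: lcs_normal.
Qed.

Lemma lcs_mono i j x : i <= j -> lcs j x -> lcs i x.
Proof.
move=> /subnK <-; elim: (j - i) => [|d IH] //= h.
by apply: IH; apply: lcs_decr; exact: h.
Qed.

Lemma comm_lcs i j x y : 0 < i -> 0 < j -> lcs i x -> lcs j y -> lcs (i + j) (cm x y).
Proof.
move=> i0; case: j => // j _; elim: j i i0 x y => [|j IH] i i0 x y Hx Hy.
  by rewrite addn1; apply: lcs_comm.
move: Hy; rewrite lcsS //.
have sN := lcs_subgrp (i + j.+2); have nN := @lcs_normal (i + j.+2).
apply: (gen_min (P := fun y => lcs (i + j.+2) (cm x y))); first exact: (commR_subgrp sN nN).
move=> w [u [v [Hu [_ ->]]]].
apply: (comm_swap sN).
rewrite -[v]invK; apply: (hw_cons sN nN).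
- rewrite addnS; apply: lcs_comm; first by rewrite addn_gt0 i0.
  apply: IH => //; case: (lcs_subgrp j.+1) => _ _ PV; exact: PV.
- rewrite -addSnnS; apply: IH => //.
  rewrite -commV; case: (lcs_subgrp i.+1) => _ _ PV; apply: PV.
  apply: lcs_comm => //; case: (lcs_subgrp i) => _ _ PV'; exact: PV'.
Qed.


Lemma wt_gt0 (u : comm m) : 0 < wt u.
Proof. by elim: u => //= b hb a ha; rewrite addn_gt0 hb. Qed.

Lemma eval_lcs (u : comm m) : lcs (wt u) (eval u).
Proof.
elim: u => [i|b IHb a IHa] //=.
by apply: comm_lcs => //; apply: wt_gt0.
Qed.

Lemma in_In (T : eqType) (x : T) (s : seq T) : x \in s -> List.In x s.
Proof. elim: s => [|y s IH] //=; rewrite in_cons => /orP[/eqP -> | /IH]; auto. Qed.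

Fixpoint trees (k : nat) : seq (comm m) :=
  if k is k'.+1 then List.map (@Leaf m) (enum 'I_m) ++
     List.flat_map (fun b => List.map (fun a => Node b a) (trees k')) (trees k')
  else [::].

Lemma trees_in k (u : comm m) : wt u <= k -> List.In u (trees k).
Proof.
elim: k u => [|k IH] u; first by move: (wt_gt0 u); case: (wt u).
case: u => [i|b a] /= h; apply/List.in_app_iff.
  by left; apply: List.in_map; apply: in_In; rewrite mem_enum.
right; apply/List.in_flat_map; exists b; split.
  apply: IH; rewrite -ltnS; apply: leq_trans h.
  by rewrite -addn1 leq_add2l wt_gt0.
apply: List.in_map; apply: IH.
rewrite -ltnS; apply: leq_trans h.
by rewrite -add1n leq_add2r wt_gt0.
Qed.

Lemma filter_le (A : Type) (L : list A) (p q : pred A) :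
  (forall z, p z -> q z) -> size (filter p L) <= size (filter q L).
Proof.
move=> hpq; elim: L => [|z L IH] //=.
case pz: (p z); first by rewrite (hpq _ pz).
by case: (q z) => //=; apply: leqW.
Qed.

Lemma filter_lt (A : Type) (L : list A) (p q : pred A) :
  (forall z, p z -> q z) -> (exists z, List.In z L /\ q z /\ ~~ p z) ->
  size (filter p L) < size (filter q L).
Proof.
move=> hpq; elim: L => [|z L IH] [w [Hw [qw pw]]] //=.
case: Hw => [ezw | Hw].
  subst w; rewrite (negbTE pw) qw /=; rewrite ltnS; exact: filter_le.
have {IH} IH := IH (ex_intro _ w (conj Hw (conj qw pw))).
case pz: (p z); first by rewrite (hpq _ pz).
by case: (q z) => //=; apply: ltnW.
Qed.

Definition decP (P : Prop) : bool :=
  if ClassicalEpsilon.excluded_middle_informative P then true else false.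

Lemma decPE (P : Prop) : decP P <-> P.
Proof. by rewrite /decP; case: ClassicalEpsilon.excluded_middle_informative. Qed.

Section Basic.
Variables (lt : comm m -> comm m -> Prop) (basic : comm m -> Prop).
Hypothesis bo : basic_order lt basic.

Lemma lt_asym u v : basic u -> basic v -> lt u v -> lt v u -> False.
Proof.
move=> Bu Bv h1 h2; apply: (bo_irrefl bo Bu).
exact: (bo_trans bo Bu Bv Bu h1 h2).
Qed.

Definition Rk k (x y : comm m) := [/\ basic x, lt y x & wt x < k].

Lemma Rk_wf k y : basic y -> Acc (Rk k) y.
Proof.
pose above y := size (filter (fun x => decP (Rk k x y)) (trees k)).
suff : forall n y, basic y -> above y < n -> Acc (Rk k) y.
  by move=> h By; exact: (h _ _ By (ltnSn _)).
elim=> [|n IH] {}y By hn; first by [].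
constructor => x [Bx lyx wx].
have hn' : above y <= n by rewrite -ltnS.
apply: IH => //; apply: (leq_trans _ hn'); apply: filter_lt.
  move=> z /decPE [Bz lxz wz]; apply/decPE; split => //.
  exact: (bo_trans bo By Bx Bz).
exists x; split; first by apply: trees_in; apply: ltnW.
split; first by apply/decPE.
by apply/negP => /decPE [_ h _]; apply: (bo_irrefl bo Bx h).
Qed.


Definition Q k := gen (fun g : FG =>
  (exists u, [/\ basic u, wt u = k & g = eval u]) \/ lcs k.+1 g).

Lemma Q_subgrp k : subgrp (Q k).
Proof. exact: gen_subgrp. Qed.

Lemma Q_normal k : normalp (Q k).
Proof.
apply: gen_normal => x g [[u [Bu wu ->]] | Hx].
  rewrite conjE; apply: gen_mul; first by apply: gen_base; left; exists u.
  apply: gen_base; right; rewrite -wu; apply: lcs_comm; first exact: wt_gt0.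
  exact: eval_lcs.
by apply: gen_base; right; apply: lcs_normal.
Qed.

Lemma Q_lcs k g : lcs k.+1 g -> Q k g.
Proof. by move=> h; apply: gen_base; right. Qed.

Lemma Q_eval k u : basic u -> wt u = k -> Q k (eval u).
Proof. by move=> Bu wu; apply: gen_base; left; exists u. Qed.

Lemma Q_push j k (d : comm m) : j + wt d = k ->
  (forall c, basic c -> wt c = j -> Q k (cm (eval c) (eval d))) ->
  forall g, Q j g -> Q k (cm g (eval d)).
Proof.
move=> ejk hc; apply: gen_min.
  exact: (commL_subgrp (Q_subgrp k) (@Q_normal k)).
move=> x [[c [Bc wc ->]] | Hx]; first exact: hc.
apply: Q_lcs; rewrite -ejk -addSn; apply: comm_lcs => //; last exact: eval_lcs.
exact: wt_gt0.
Qed.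

Lemma keyR k : forall a b, basic a -> basic b -> lt a b -> wt a + wt b = k ->
  Q k (cm (eval b) (eval a)).
Proof.
elim/ltn_ind: k => k IHk.
have sQ := Q_subgrp k; have nQ := @Q_normal k.
suff H : forall a, Acc (Rk k) a -> basic a -> wt a < k -> forall b, basic b -> lt a b ->
    wt a + wt b = k -> Q k (cm (eval b) (eval a)).
  move=> a b Ba Bb lab wab; apply: (H a (Rk_wf k Ba) Ba _ b Bb lab wab).
  by rewrite -wab -{1}(addn0 (wt a)) ltn_add2l wt_gt0.
move=> a; elim=> {}a _ IHa Ba wa b Bb lab wab.
have pair : forall c d, basic c -> basic d -> lt a c -> lt a d ->
    wt c + wt d = k -> Q k (cm (eval c) (eval d)).
  move=> c d Bc Bd lac lad wcd.
  have wc : wt c < k by rewrite -wcd -{1}(addn0 (wt c)) ltn_add2l wt_gt0.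
  have wd : wt d < k by rewrite -wcd -{1}(add0n (wt d)) ltn_add2r wt_gt0.
  case: (bo_total bo Bc Bd) => [-> | [lcd | ldc]].
  - by rewrite commgg; case: sQ.
  - apply: (comm_swap sQ).
    exact: (IHa c (And3 Bc lac wc) Bc wc d Bd lcd wcd).
  - apply: (IHa d (And3 Bd lad wd) Bd wd c Bc ldc); by rewrite addnC.
case: b Bb lab wab => [i | b1 b2] Bb lab wab.
-
  have wa1 : wt a <= 1.
    rewrite leqNgt; apply/negP => h.
    by apply: (lt_asym Ba Bb lab); apply: (bo_weight bo Bb Ba).
  case: a Ba wa1 lab wab {IHa pair wa} => [j | a1 a2] Ba wa1 lab wab.
    rewrite -wab addnC; apply: (Q_eval (u := Node (Leaf i) (Leaf j))) => //.
    by apply/(bo_node bo).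
  by move: wa1 (wt_gt0 a1) (wt_gt0 a2) => /=; case: (wt a1) => [|[|x]] //;
     case: (wt a2).
- case/(bo_node bo): (Bb) => Bb1 Bb2 l21 cond.
  case: (bo_total bo Bb2 Ba) => [e2 | [l2a | la2]].
  + rewrite -wab addnC; apply: (Q_eval (u := Node (Node b1 b2) a)) => //.
    by apply/(bo_node bo); split => //; left.
  + rewrite -wab addnC; apply: (Q_eval (u := Node (Node b1 b2) a)) => //.
    by apply/(bo_node bo); split => //; right.
  +
    have la1 : lt a b1 by apply: (bo_trans bo Ba Bb2 Bb1).
    have g1 := wt_gt0 b1; have g2 := wt_gt0 b2; have g0 := wt_gt0 a.
    have wab' : wt b1 + wt b2 + wt a = k by rewrite -wab /=; lia.
    have w1 : wt b1 + wt a < k by lia.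
    have w2 : wt b2 + wt a < k by lia.
    have R1 := IHk _ w1 a b1 Ba Bb1 la1 (addnC _ _).
    have R2 := IHk _ w2 a b2 Ba Bb2 la2 (addnC _ _).
    have F1 : forall g, Q (wt b1 + wt a) g -> Q k (cm g (eval b2)).
      apply: Q_push; first by lia.
      move=> c Bc wc; apply: pair => //; last by lia.
      by apply: (bo_weight bo Ba Bc); lia.
    have F2 : forall g, Q (wt b2 + wt a) g -> Q k (cm g (eval b1)).
      apply: Q_push; first by lia.
      move=> c Bc wc; apply: pair => //; last by lia.
      by apply: (bo_weight bo Ba Bc); lia.
    have sQ1 := Q_subgrp (wt b1 + wt a); have nQ1 := @Q_normal (wt b1 + wt a).
    have sQ2 := Q_subgrp (wt b2 + wt a); have nQ2 := @Q_normal (wt b2 + wt a).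
    have h1 : Q k (cm (cm (eval a) (inv (eval b1))) (inv (eval b2))).
      apply: (comm_invr sQ nQ); apply: F1.
      by apply: (comm_invr sQ1 nQ1); apply: (comm_swap sQ1).
    have h3 : Q k (cm (cm (inv (eval b2)) (inv (eval a))) (eval b1)).
      apply: F2; apply: (comm_invr sQ2 nQ2); exact: (comm_invl sQ2 nQ2).
    have := hw_cons sQ nQ h1 h3.
    by rewrite invK.
Qed.

Lemma lcs_Q k : 0 < k -> forall g, lcs k g -> Q k g.
Proof.
case: k => // k _; elim: k => [|k IH] g.
  move=> _; apply: gen_sub (FG_gen g) => x [i ->].
  by apply: (Q_eval (u := Leaf i)) => //; apply: (bo_leaf bo).
rewrite lcsS //; apply: gen_min; first exact: Q_subgrp.
move=> x [h [f [Hh [_ ->]]]].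
have sQ := Q_subgrp k.+2; have nQ := @Q_normal k.+2.
move: (IH h Hh); apply: (gen_min (P := fun h => Q k.+2 (cm h f))).
  exact: (commL_subgrp sQ nQ).
move=> y [[c [Bc wc ->]] | Hy]; last first.
  by apply: Q_lcs; apply: lcs_comm.
apply: (gen_min (P := fun f => Q k.+2 (cm (eval c) f))) (FG_gen f).
  exact: (commR_subgrp sQ nQ).
move=> z [i ->].
have Bi : basic (Leaf i) := bo_leaf bo i.
case: (bo_total bo Bc Bi) => [-> | [lci | lic]].
- by rewrite commgg; case: sQ.
- apply: (comm_swap sQ); apply: (keyR (a := c) (b := Leaf i)) => //.
  by rewrite wc addn1.
- by apply: (keyR (a := Leaf i) (b := c)) => //; rewrite wc.
Qed.

Definition T k N := gen (fun g : FG =>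
  (exists u, [/\ basic u, (k <= wt u) && (wt u < N) & g = eval u]) \/ lcs N g).

Lemma lcs_T j : forall k N, 0 < k -> k + j = N -> forall g, lcs k g -> T k N g.
Proof.
elim: j => [|j IH] k N k0 ekN g Hg.
  by apply: gen_base; right; rewrite -ekN addn0.
apply: gen_sub (lcs_Q k0 Hg) => x [[u [Bu wu ->]] | Hx].
  by apply: gen_base; left; exists u; split => //; lia.
have := IH k.+1 N isT (etrans (addSnnS _ _) ekN) x Hx.
apply: gen_sub => y [[u [Bu wu ->]] | Hy].
  by apply: gen_base; left; exists u; split => //; lia.
by apply: gen_base; right.
Qed.

Lemma main_aux (n c : nat) :
  (1 <= n)%N -> (1 <= c)%N -> (n.-1 <= c)%N ->
  let Y := fun u : comm m => basic u /\ (c.+1 <= wt u <= c + n)%N in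
  let Z := fun g : FG => exists a b : comm m,
             [/\ Y a, Y b, lt a b & g = FGcomm (eval b) (eval a)] in
  forall g : FG,
    commsub (lcs c.+1) (lcs c.+1) g <->
    setmul (gen Z) (commsub (lcs (c + n).+1) (lcs c.+1)) g.
Proof.
move=> hn hc hnc Y Z g.
set N := (c + n).+1.
set M := commsub (lcs N) (lcs c.+1).
set K := setmul (gen Z) M.
have sM : subgrp M := gen_subgrp _.
have nM : normalp M.
  apply: gen_normal => x f [h [k [Hh [Hk ->]]]].
  rewrite conj_comm; apply: gen_base; exists (cj h f), (cj k f).
  split; first exact: (@lcs_normal N h f Hh).
  by split; first exact: (@lcs_normal c.+1 k f Hk).
have sZ : subgrp (gen Z) := gen_subgrp _.
have sK : subgrp K.
  case: sM => M1 MM MV; case: sZ => Z1 ZM ZV.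
  split.
  - by exists one, one; split => //; rewrite mulg1.
  - move=> x y [z1 [m1 [Hz1 [Hm1 ->]]]] [z2 [m2 [Hz2 [Hm2 ->]]]].
    exists (z1 ** z2), (cj m1 z2 ** m2); split; first exact: ZM.
      by split; [apply: MM => //; apply: nM | gsolve].
  - move=> x [z [mm [Hz [Hm ->]]]].
    exists (inv z), (cj (inv mm) (inv z)); split; first exact: ZV.
    by split; [apply: nM; apply: MV | gsolve].
have KM : forall x, M x -> K x.
  move=> x Hx; exists one, x; split; first by case: sZ.
  by split => //; rewrite mul1g.
have KZ : forall x, gen Z x -> K x.
  move=> x Hx; exists x, one; split => //.
  by split; [case: sM | rewrite mulg1].
have Ylcs : forall u, Y u -> lcs c.+1 (eval u).
  by move=> u [_ hu]; apply: (lcs_mono (j := wt u)); [lia | exact: eval_lcs].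
have sL := lcs_subgrp (c.+1 + c.+1).
have ZL : forall x, gen Z x -> lcs (c.+1 + c.+1) x.
  apply: gen_min => // x [a [b [Ya Yb _ ->]]].
  by apply: comm_lcs => //; apply: Ylcs.
have ML : forall x, M x -> lcs (c.+1 + c.+1) x.
  apply: gen_min => // x [h [k [Hh [Hk ->]]]].
  apply: (lcs_mono (j := N + c.+1)); first by rewrite /N; lia.
  exact: comm_lcs.
have KL : forall x, K x -> lcs N x.
  move=> x [z [mm [Hz [Hm ->]]]]; apply: (lcs_mono (j := c.+1 + c.+1)).
    by rewrite /N; move: hnc hn; lia.
  by case: sL => _ LM _; apply: LM; [apply: ZL | apply: ML].
have Kconj : forall x h, K x -> lcs c.+1 h -> K (cj x h).
  move=> x h Hx Hh; rewrite conjE; case: sK => _ KMul _; apply: KMul => //.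
  by apply: KM; apply: gen_base; exists x, h; split => //; apply: KL.
have sLc := lcs_subgrp c.+1.
have NLc : forall x, lcs N x -> lcs c.+1 x.
  by move=> x; apply: lcs_mono; rewrite /N; lia.
have TY : forall u, basic u /\ (c.+1 <= wt u) && (wt u < N) -> Y u.
  by move=> u [Bu hu]; split => //; rewrite /N ltnS in hu.
have HT : forall x, lcs c.+1 x -> T c.+1 N x.
  by move=> x Hx; apply: (lcs_T (j := n)) => //; rewrite /N addSnnS.
split.
- apply: gen_min => // x0 [g1 [h1 [Hg1 [Hh1 ->]]]].
  pose L := fun g => lcs c.+1 g /\ forall h, lcs c.+1 h -> K (cm g h).
  have sLL : subgrp L.
    case: sLc => L1 LM LV; case: sK => K1 KMul KV; split.
    - by split => // h _; rewrite comm1g.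
    - move=> x y [Hx hx] [Hy hy]; split; first exact: LM.
      move=> h Hh; rewrite commMl; apply: KMul; last exact: hy.
      by apply: Kconj => //; apply: hx.
    - move=> x [Hx hx]; split; first exact: LV.
      move=> h Hh; rewrite commVl; apply: Kconj; last exact: LV.
      by apply: KV; apply: hx.
  suff : L g1 by case=> _; apply.
  apply: (gen_min sLL) (HT _ Hg1) => y0 [[u [Bu wu ->]] | Hy]; last first.
    split; first exact: NLc.
    by move=> h Hh; apply: KM; apply: gen_base; exists y0, h.
  have Yu : Y u by apply: TY.
  split; first exact: Ylcs.
  pose L' := fun h => lcs c.+1 h /\ K (cm (eval u) h).
  have sL' : subgrp L'.
    case: sLc => L1 LM LV; case: sK => K1 KMul KV; split.
    - by split => //; rewrite commg1.
    - move=> x y [Hx hx] [Hy hy]; split; first exact: LM.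
      by rewrite commMr; apply: KMul => //; apply: Kconj.
    - move=> x [Hx hx]; split; first exact: LV.
      by rewrite commVr; apply: Kconj; [apply: KV | apply: LV].
  move=> h Hh.
  suff : L' h by case.
  apply: (gen_min sL') (HT _ Hh) => z0 [[v [Bv wv ->]] | Hz]; last first.
    split; first exact: NLc.
    rewrite -commV; case: sK => _ _ KV; apply: KV; apply: KM.
    by apply: gen_base; exists z0, (eval u); split; [exact: Hz | split => //; exact: Ylcs].
  have Yv : Y v by apply: TY.
  split; first exact: Ylcs.
  case: (bo_total bo Bu Bv) => [-> | [luv | lvu]].
  + by rewrite commgg; case: sK.
  + rewrite -commV; case: sK => _ _ KV; apply: KV; apply: KZ; apply: gen_base.
    by exists u, v; split.
  + by apply: KZ; apply: gen_base; exists v, u; split.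
- move=> [z [mm [Hz [Hm ->]]]]; apply: gen_mul.
    apply: gen_sub Hz => x [a [b [Ya Yb _ ->]]]; apply: gen_base.
    by exists (eval b), (eval a); split; [exact: Ylcs | split => //; exact: Ylcs].
  apply: gen_sub Hm => x [h [k [Hh [Hk ->]]]]; apply: gen_base.
  by exists h, k; split; [exact: NLc | split].
Qed.
End Basic.

End Grp.

Theorem lemma2p3 (m n c : nat) (lt : comm m -> comm m -> Prop) (basic : comm m -> Prop) :
  (1 <= n)%N -> (1 <= c)%N -> (n.-1 <= c)%N -> basic_order lt basic ->
  let Y := fun u : comm m => basic u /\ (c.+1 <= wt u <= c + n)%N in
  let Z := fun g : FG m => exists a b : comm m,
             [/\ Y a, Y b, lt a b & g = FGcomm (eval b) (eval a)] in
  forall g : FG m,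
    commsub (@lcs m c.+1) (@lcs m c.+1) g <->
    setmul (gen Z) (commsub (@lcs m (c + n).+1) (@lcs m c.+1)) g.
Proof.
move=> h1 h2 h3 bo; exact: (main_aux bo h1 h2 h3).
Qed.
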